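(* Let $q\ge 2$ be an integer and define $s_q(0)=0$ and $s_q(p)=s_q(p-1)+\lceil (s_q(p-1)+1)/(q-1)\rceil$ for positive integers $p$. Then $\operatorname{slog}(s_q(p),q)=p$ for all $p\ge0$, and for every integer $k\ge 0$, $\operatorname{slog}(k,q)$ equals the least $p\ge 0$ such that $k\le s_q(p)$.
   Context: The step logarithm is defined for positive integers $q$ and nonnegative integers $p$ by $\operatorname{slog}(0,q)=0$ and $\operatorname{slog}(p,q)=\operatorname{slog}(p-\lceil p/q\rceil,q)+1$ for $p\ge1$. *)

(* Defs.v *)
From mathcomp Require Import all_boot.
Set Implicit Arguments. Unset Strict Implicit. Unset Printing Implicit Defensive.

Definition ceil_div (p q : nat) : nat := (p + q.-1) %/ q.

(* slog with fuel: slog(0,q) = 0, slog(p,q) = slog(p - ceil(p/q), q) + 1.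
   For q >= 1 and p >= 1, ceil(p/q) >= 1, so fuel p suffices. *)
Fixpoint slog_fuel (fuel p q : nat) : nat :=
  match fuel with
  | 0 => 0
  | fuel'.+1 => if p == 0 then 0 else (slog_fuel fuel' (p - ceil_div p q) q).+1
  end.

Definition slog (p q : nat) : nat := slog_fuel p p q.

Fixpoint sq (q p : nat) : nat :=
  match p with
  | 0 => 0
  | p'.+1 => sq q p' + ceil_div (sq q p').+1 q.-1
  end.

Lemma slog0 q : slog 0 q = 0. Proof. by []. Qed.

(* Main.v *)
Require Import Defs.
From mathcomp Require Import all_boot zify.

Lemma cd_pos k q : 0 < q -> 0 < k -> 0 < ceil_div k q.
Proof. move=> hq hk; rewrite /ceil_div divn_gt0 //; lia. Qed.

Lemma fuel_eq q : 0 < q -> forall n m k, k <= n -> k <= m ->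
  slog_fuel n k q = slog_fuel m k q.
Proof.
move=> hq; elim=> [|n IH] [|m] k /= hn hm //.
- by have -> : k = 0 by lia.
- by have -> : k = 0 by lia.
case: eqP => // /eqP hk; congr _.+1; apply: IH.
- have := cd_pos k q hq (_ : 0 < k); lia.
- have := cd_pos k q hq (_ : 0 < k); lia.
Qed.

Lemma slogE q k : 0 < q -> slog k q = if k == 0 then 0 else (slog (k - ceil_div k q) q).+1.
Proof.
move=> hq; rewrite /slog; case: k => [|k] //=.
congr _.+1; apply: fuel_eq => //; have := cd_pos k.+1 q hq (ltn0Sn k); lia.
Qed.

Lemma key q k s : 2 <= q ->
  (k - ceil_div k q <= s) = (k <= s + ceil_div s.+1 q.-1).
Proof.
move=> hq; rewrite /ceil_div.
have h1 := divn_eq (k + q.-1) q; have h2 := ltn_pmod (k + q.-1) (_ : 0 < q).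
have h3 := divn_eq (s.+1 + q.-1.-1) q.-1; have h4 := ltn_pmod (s.+1 + q.-1.-1) (_ : 0 < q.-1).
set d := (k + q.-1) %/ q in h1 *; set r := (k + q.-1) %% q in h1 h2.
set e := (s.+1 + q.-1.-1) %/ q.-1 in h3 *; set t := (s.+1 + q.-1.-1) %% q.-1 in h3 h4.
have {}h2 : r < q by apply: h2; lia.
have {}h4 : t < q.-1 by apply: h4; lia.
apply/idP/idP => H; nia.
Qed.

Lemma P q : 2 <= q -> forall p k, (k <= sq q p) = (slog k q <= p).
Proof.
move=> hq; elim=> [|p IH] k.
  rewrite slogE; last lia. by case: k.
rewrite slogE; last lia. case: k => [|k] //=.
by rewrite ltnS -IH -key.
Qed.

Lemma sq_lt q p : 2 <= q -> sq q p < sq q p.+1.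
Proof. move=> hq /=; have := cd_pos (sq q p).+1 q.-1 (_ : 0 < q.-1) (ltn0Sn _); lia. Qed.

Lemma sq_mono q : 2 <= q -> forall p r, p < r -> sq q p < sq q r.
Proof.
move=> hq p; elim=> [|r IH] // H.
have := sq_lt q r hq; case: (ltngtP p r) => h.
- have := IH h; lia.
- lia.
- subst; lia.
Qed.

Theorem mainTheorem9 (q : nat) (hq : 2 <= q) :
  (forall p : nat, slog (sq q p) q = p) /\
  (forall k : nat,
     k <= sq q (slog k q) /\ (forall p : nat, p < slog k q -> sq q p < k)).
Proof.
split.
  move=> p; apply/eqP; rewrite eqn_leq -P // leqnn /=.
  case: p => // p; rewrite ltnNge -P //; apply/negP => H.
  have := sq_mono q hq p p.+1 (ltnSn p); lia.
move=> k; split; first by rewrite P.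
move=> p hp; rewrite ltnNge P //; lia.
Qed.
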